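(* For every metric space $(X,d)$, the upper Vietoris topology and the Scott topology on $\mathsf{K}((X,d))$ coincide.
   Context: For a metric space, $\mathsf{K}(X)$ is the set of nonempty compact subsets, ordered by reverse inclusion. Scott topology on a poset: upper sets $U$ such that every directed $D$ whose supremum exists and lies in $U$ meets $U$ (a family in $\mathsf{K}(X)$ has a supremum iff its intersection lies in $\mathsf{K}(X)$, and then it is the intersection). Upper Vietoris topology: base $\Box U=\{K:K\subseteq U\}$, $U$ open. *)

(* Defs.v *)
From Stdlib Require Import Reals List.
Open Scope R_scope.

Record MetricSpace := {
  carrier :> Type;
  dist : carrier -> carrier -> R;
  dist_nonneg : forall x y, 0 <= dist x y;
  dist_eq0 : forall x y, dist x y = 0 <-> x = y;
  dist_sym : forall x y, dist x y = dist y x;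
  dist_tri : forall x y z, dist x z <= dist x y + dist y z
}.

Section MS.
Variable X : MetricSpace.

Definition is_open (U : X -> Prop) : Prop :=
  forall x, U x -> exists eps, 0 < eps /\ forall y, dist X x y < eps -> U y.

Definition subset (A B : X -> Prop) : Prop := forall x, A x -> B x.

Definition is_compact (K : X -> Prop) : Prop :=
  forall F : (X -> Prop) -> Prop,
    (forall V, F V -> is_open V) ->
    (forall x, K x -> exists V, F V /\ V x) ->
    exists l : list (X -> Prop),
      (forall V, In V l -> F V) /\ (forall x, K x -> exists V, In V l /\ V x).

Definition KX : Type := { K : X -> Prop | (exists x, K x) /\ is_compact K }.

Definition Kset (K : KX) : X -> Prop := proj1_sig K.

Definition Kle (K L : KX) : Prop := subset (Kset L) (Kset K).

Definition upper_set (W : KX -> Prop) : Prop :=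
  forall K L, W K -> Kle K L -> W L.

Definition directed (D : KX -> Prop) : Prop :=
  (exists K, D K) /\
  forall K L, D K -> D L -> exists M, D M /\ Kle K M /\ Kle L M.

Definition is_lub (D : KX -> Prop) (s : KX) : Prop :=
  (forall K, D K -> Kle K s) /\
  (forall t, (forall K, D K -> Kle K t) -> Kle s t).

Definition scott_open (W : KX -> Prop) : Prop :=
  upper_set W /\
  forall D, directed D -> forall s, is_lub D s -> W s -> exists K, D K /\ W K.

(** Upper Vietoris topology: generated by the base  Box U = {K | K ⊆ U}, U open;
    its open sets are the unions of basic sets. *)
Definition box (U : X -> Prop) : KX -> Prop := fun K => subset (Kset K) U.

Definition upper_vietoris_open (W : KX -> Prop) : Prop :=
  forall K, W K -> exists U, is_open U /\ box U K /\ (forall L, box U L -> W L).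

End MS.

(* Main.v *)
Require Import Defs.
From Stdlib Require Import Reals List.
From Stdlib Require Import Lra Lia Classical ClassicalEpsilon.
Open Scope R_scope.

Lemma list_min {A:Type} (l : list A) (Q : A -> R -> Prop) :
  (forall a r r', 0 < r' <= r -> Q a r -> Q a r') ->
  (forall a, In a l -> exists r, 0 < r /\ Q a r) ->
  exists r, 0 < r /\ forall a, In a l -> Q a r.
Proof.
  intros Hmono. induction l as [|a l IH]; intros H.
  - exists 1; split; [lra| intros a []].
  - destruct (H a (or_introl eq_refl)) as [r1 [Hr1 Q1]].
    destruct IH as [r2 [Hr2 Q2]]. { intros b Hb; apply H; right; exact Hb. }
    assert (Hm : 0 < Rmin r1 r2) by (apply Rmin_glb_lt; assumption).
    exists (Rmin r1 r2); split; [exact Hm|].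
    intros b [<-|Hb].
    + apply (Hmono a r1); [split; [exact Hm| apply Rmin_l]| exact Q1].
    + apply (Hmono b r2); [split; [exact Hm| apply Rmin_r]| apply Q2; exact Hb].
Qed.

Lemma ball_open (X:MetricSpace) k r : is_open X (fun z => Defs.dist X k z < r).
Proof.
  intros z Hz. exists (r - Defs.dist X k z); split; [lra|].
  intros y Hy. pose proof (Defs.dist_tri X k z y). lra.
Qed.

Lemma small_inv (e : R) : 0 < e -> exists N : nat, / (INR N + 1) < e.
Proof.
  intros He. destruct (archimed_cor1 e He) as [N [HN HN0]].
  exists N. apply lt_INR in HN0. simpl in HN0.
  apply Rle_lt_trans with (/ INR N); [|exact HN].
  apply Rinv_le_contravar; lra.
Qed.

Lemma inv_mono (m N : nat) : (N <= m)%nat -> / (INR m + 1) <= / (INR N + 1).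
Proof.
  intros H. apply le_INR in H. pose proof (pos_INR N).
  apply Rinv_le_contravar; lra.
Qed.

Lemma compact_closed (X:MetricSpace) (K : X -> Prop) : is_compact X K ->
  forall x, ~ K x -> exists r, 0 < r /\ forall y, Defs.dist X x y < r -> ~ K y.
Proof.
  intros HK x Hx.
  destruct (HK (fun V => exists r, 0 < r /\ V = (fun y => r < Defs.dist X x y))) as [l [Hl Hc]].
  - intros V [r [Hr ->]]. intros z Hz. exists (Defs.dist X x z - r); split; [lra|].
    intros y Hy. pose proof (Defs.dist_tri X x y z). pose proof (Defs.dist_sym X y z). lra.
  - intros y Hy. exists (fun z => Defs.dist X x y / 2 < Defs.dist X x z). split.
    + exists (Defs.dist X x y / 2); split; [|reflexivity].
      pose proof (Defs.dist_nonneg X x y).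
      destruct (Req_dec (Defs.dist X x y) 0) as [E|E].
      * apply dist_eq0 in E. subst. contradiction.
      * lra.
    + simpl. pose proof (Defs.dist_nonneg X x y).
      destruct (Req_dec (Defs.dist X x y) 0) as [E|E].
      * apply dist_eq0 in E. subst. contradiction.
      * lra.
  - destruct (list_min l (fun V r => forall y, V y -> r < Defs.dist X x y)) as [r [Hr HQ]].
    + intros V r r' Hr' HV y Hy; specialize (HV y Hy); lra.
    + intros V HV. destruct (Hl V HV) as [r [Hr ->]]. exists r; split; auto.
    + exists r; split; auto. intros y Hy HKy.
      destruct (Hc y HKy) as [V [HVl HVy]]. specialize (HQ V HVl y HVy). lra.
Qed.

Lemma compl_open (X:MetricSpace) (K : X -> Prop) : is_compact X K ->
  is_open X (fun y => ~ K y).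
Proof.
  intros HK x Hx. destruct (compact_closed X K HK x Hx) as [r [Hr H]].
  exists r; split; auto.
Qed.

Lemma eps_nbhd (X:MetricSpace) (K V : X -> Prop) : is_compact X K -> is_open X V ->
  (forall x, K x -> V x) -> exists e, 0 < e /\ forall k y, K k -> Defs.dist X k y < e -> V y.
Proof.
  intros HK HV HKV.
  destruct (HK (fun B => exists k r, K k /\ 0 < r /\ (forall z, Defs.dist X k z < 2*r -> V z)
                 /\ B = (fun z => Defs.dist X k z < r))) as [l [Hl Hc]].
  - intros B [k [r [_ [_ [_ ->]]]]]. apply ball_open.
  - intros k Hk. destruct (HV k (HKV k Hk)) as [e [He Hb]].
    exists (fun z => Defs.dist X k z < e/2). split.
    + exists k, (e/2). repeat split; auto; try lra. intros z Hz. apply Hb. lra.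
    + assert (Defs.dist X k k = 0) by (apply dist_eq0; reflexivity). simpl. lra.
  - destruct (list_min l (fun B e => forall z, B z -> forall y, Defs.dist X z y < e -> V y))
      as [e [He HQ]].
    + intros B r r' Hr HB z Hz y Hy. apply (HB z Hz y). lra.
    + intros B HB. destruct (Hl B HB) as [k [r [Hk [Hr [H2 ->]]]]]. exists r; split; auto.
      intros z Hz y Hy. apply H2. pose proof (Defs.dist_tri X k z y). lra.
    + exists e; split; auto. intros k y Hk Hky.
      destruct (Hc k Hk) as [B [HBl HBk]]. exact (HQ B HBl k HBk y Hky).
Qed.

Lemma single_compact (X:MetricSpace) (x : X) : is_compact X (fun y => y = x).
Proof.
  intros F HF Hc. destruct (Hc x eq_refl) as [V [HFV HVx]].
  exists (V :: nil). split.
  - intros V' [<-|[]]; auto.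
  - intros y ->. exists V; split; [left; auto| auto].
Qed.

Definition single (X:MetricSpace) (x : X) : KX X :=
  exist (fun P => (exists y, P y) /\ is_compact X P) (fun y => y = x)
    (conj (ex_intro _ x eq_refl) (single_compact X x)).

Lemma dir1 (X:MetricSpace) W : upper_vietoris_open X W -> scott_open X W.
Proof.
  intros H. split.
  - intros K L HK HKL. destruct (H K HK) as [U [HU [HKU HUW]]]. apply HUW.
    intros x Hx. apply HKU, HKL, Hx.
  - intros D [[K0 HK0] Hdir] s [Hub Hlub] Hs.
    destruct (H s Hs) as [U [HU [HsU HUW]]].
    assert (HI : forall x, (forall K, D K -> Kset X K x) -> U x).
    { intros x Hx. apply HsU.
      apply (Hlub (single X x)); [|reflexivity].
      intros K HK y Hy. unfold Kset, single in Hy; simpl in Hy. subst. apply Hx; auto. }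
    set (F := fun V => V = U \/ exists K, D K /\ V = (fun y => ~ Kset X K y)).
    destruct (proj2 (proj2_sig K0) F) as [l [HlF Hlc]].
    + intros V [->|[K [_ ->]]]; auto. apply compl_open. exact (proj2 (proj2_sig K)).
    + intros x Hx. destruct (classic (U x)) as [Ux|nUx].
      * exists U; split; auto. left; auto.
      * assert (~ forall K, D K -> Kset X K x) as Hn by (intro; apply nUx, HI; auto).
        apply not_all_ex_not in Hn. destruct Hn as [K HK].
        apply imply_to_and in HK. destruct HK as [DK nK].
        exists (fun y => ~ Kset X K y). split; auto. right; exists K; auto.
    + assert (Hind : forall l, (forall V, In V l -> F V) -> exists M, D M /\ Kle X K0 M /\
                forall V, In V l -> forall x, Kset X M x -> V x -> U x).
      { induction l0 as [|V l' IH]; intros Hl'.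
        - exists K0. split; auto. split; [intros x Hx; exact Hx| intros V []].
        - destruct IH as [M' [DM' [HM'0 HM']]]. { intros V' HV'; apply Hl'; right; auto. }
          destruct (Hl' V (or_introl eq_refl)) as [->|[K [DK ->]]].
          + exists M'. split; auto. split; auto. intros V' [<-|HV'] x Hx HVx; auto.
            exact (HM' V' HV' x Hx HVx).
          + destruct (Hdir M' K DM' DK) as [M'' [DM'' [H1 H2]]].
            exists M''. split; auto. split.
            * intros x Hx. apply HM'0, H1, Hx.
            * intros V' [<-|HV'] x Hx HVx.
              -- exfalso. apply HVx, H2, Hx.
              -- apply (HM' V' HV' x); auto. }
      destruct (Hind l HlF) as [M [DM [HM0 HM]]].
      exists M. split; auto. apply HUW. intros x Hx.
      destruct (Hlc x (HM0 x Hx)) as [V [HVl HVx]].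
      exact (HM V HVl x Hx HVx).
Qed.

Lemma dir2 (X:MetricSpace) W : scott_open X W -> upper_vietoris_open X W.
Proof.
  intros [Hup Hsc] K HK.
  destruct (classic (exists U, is_open X U /\ box X U K /\ (forall L, box X U L -> W L)))
    as [?|Hno]; [assumption|exfalso].
  set (Kp := Kset X K).
  assert (HKc : is_compact X Kp) by exact (proj2 (proj2_sig K)).
  assert (HKne : exists x, Kp x) by exact (proj1 (proj2_sig K)).
  set (Un := fun (n:nat) y => exists k, Kp k /\ Defs.dist X k y < / (INR n + 1)).
  assert (Hpos : forall n:nat, 0 < / (INR n + 1)).
  { intros n. pose proof (pos_INR n). apply Rinv_0_lt_compat. lra. }
  assert (HUo : forall n, is_open X (Un n)).
  { intros n y [k [Hk Hky]]. exists (/ (INR n + 1) - Defs.dist X k y). split; [lra|].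
    intros z Hz. exists k. split; auto. pose proof (Defs.dist_tri X k y z). lra. }
  assert (HUK : forall n, box X (Un n) K).
  { intros n x Hx. exists x. split; auto.
    assert (Defs.dist X x x = 0) by (apply Defs.dist_eq0; reflexivity).
    specialize (Hpos n). lra. }
  assert (HL : forall n, {L : KX X | box X (Un n) L /\ ~ W L}).
  { intros n. apply constructive_indefinite_description.
    apply not_all_not_ex. intros Hn. apply Hno. exists (Un n). repeat split; auto.
    intros L HL. apply NNPP. intros HW. apply (Hn L). split; auto. }
  assert (HLf : exists Lf : nat -> KX X, forall n, box X (Un n) (Lf n) /\ ~ W (Lf n)).
  { exists (fun n => proj1_sig (HL n)). intros n. exact (proj2_sig (HL n)). }
  clear HL. destruct HLf as [L HLf].
  set (Mp := fun n x => Kp x \/ exists m, (n <= m)%nat /\ Kset X (L m) x).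
  assert (Mmono : forall a b x, (a <= b)%nat -> Mp b x -> Mp a x).
  { intros a b x Hab [H|[m [Hm H]]]; [left; auto| right; exists m; split; auto; lia]. }
  assert (Mne : forall n, exists x, Mp n x).
  { intros n. destruct HKne as [x Hx]. exists x. left; auto. }
  assert (HMc : forall n, is_compact X (Mp n)).
  { intros n F HF Hc.
    destruct (HKc F HF (fun x Hx => Hc x (or_introl Hx))) as [l0 [Hl0F Hl0c]].
    set (V0 := fun y => exists V, In V l0 /\ V y).
    assert (HV0o : is_open X V0).
    { intros y [V [HVl HVy]]. destruct (HF V (Hl0F V HVl) y HVy) as [e [He Hb]].
      exists e; split; auto. intros z Hz. exists V; split; auto. }
    destruct (eps_nbhd X Kp V0 HKc HV0o (fun x Hx => Hl0c x Hx)) as [e [He He']].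
    destruct (small_inv e He) as [N HN].
    assert (Hfin : forall N', exists l, (forall V, In V l -> F V) /\
       forall x m, (n <= m)%nat -> (m < N')%nat -> Kset X (L m) x -> exists V, In V l /\ V x).
    { induction N' as [|N' IH].
      - exists nil. split; [intros V []|]. intros; lia.
      - destruct IH as [l1 [Hl1F Hl1c]].
        destruct (Compare_dec.le_lt_dec n N') as [h|h].
        + destruct (proj2 (proj2_sig (L N')) F HF
             (fun x Hx => Hc x (or_intror (ex_intro _ N' (conj h Hx))))) as [l2 [Hl2F Hl2c]].
          exists (l2 ++ l1). split.
          * intros V HV. apply in_app_or in HV. destruct HV; auto.
          * intros x m Hnm HmN Hx. destruct (Nat.eq_dec m N') as [->|Hne].
            -- destruct (Hl2c x Hx) as [V [HV1 HV2]]. exists V; split; auto.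
               apply in_or_app; left; auto.
            -- destruct (Hl1c x m Hnm ltac:(lia) Hx) as [V [HV1 HV2]]. exists V; split; auto.
               apply in_or_app; right; auto.
        + exists l1. split; auto. intros x m Hnm HmN Hx. apply (Hl1c x m); auto. lia. }
    destruct (Hfin N) as [l1 [Hl1F Hl1c]].
    exists (l0 ++ l1). split.
    - intros V HV. apply in_app_or in HV. destruct HV; auto.
    - intros x [Hx|[m [Hnm Hm]]].
      + destruct (Hl0c x Hx) as [V [HV1 HV2]]. exists V; split; auto. apply in_or_app; auto.
      + destruct (Compare_dec.lt_dec m N) as [Hlt|Hge].
        * destruct (Hl1c x m Hnm Hlt Hm) as [V [HV1 HV2]]. exists V; split; auto.
          apply in_or_app; auto.
        * destruct (proj1 (HLf m) x Hm) as [k [Hk Hkx]].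
          pose proof (inv_mono m N ltac:(lia)).
          destruct (He' k x Hk ltac:(lra)) as [V [HV1 HV2]].
          exists V; split; auto. apply in_or_app; auto. }
  set (M := fun n => exist (fun P => (exists y, P y) /\ is_compact X P) (Mp n)
                       (conj (Mne n) (HMc n)) : KX X).
  set (D := fun A : KX X => exists n, forall x, Kset X A x <-> Mp n x).
  assert (HDM : forall n, D (M n)).
  { intros n. exists n. intros x. simpl. tauto. }
  assert (Hdir : directed X D).
  { split. { exists (M 0%nat). apply HDM. }
    intros A B [a Ha] [b Hb]. exists (M (max a b)). split; [apply HDM|]. split.
    - intros x Hx. apply Ha. apply (Mmono a (max a b)); [lia|exact Hx].
    - intros x Hx. apply Hb. apply (Mmono b (max a b)); [lia|exact Hx]. }
  assert (Hlub : Defs.is_lub X D K).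
  { split.
    - intros A [n Hn] x Hx. apply Hn. left. exact Hx.
    - intros t Ht x Hx. apply NNPP. intros nK.
      destruct (compact_closed X Kp HKc x nK) as [r [Hr Hb]].
      destruct (small_inv r Hr) as [N HN].
      specialize (Ht (M N) (HDM N) x Hx). simpl in Ht.
      destruct Ht as [HK'|[m [Hm HLm]]]; [contradiction|].
      destruct (proj1 (HLf m) x HLm) as [k [Hk Hkx]].
      pose proof (inv_mono m N Hm).
      apply (Hb k); [|exact Hk]. rewrite Defs.dist_sym. lra. }
  destruct (Hsc D Hdir K Hlub HK) as [A [[n Hn] HWA]].
  apply (proj2 (HLf n)). apply (Hup A); auto.
  intros x Hx. apply Hn. right. exists n. split; auto.
Qed.

Theorem mainTheorem14 (X : MetricSpace) (W : KX X -> Prop) :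
  upper_vietoris_open X W <-> scott_open X W.
Proof. split; [apply dir1|apply dir2]. Qed.
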